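(* Let $N\ge2$, $T=\{x\in\mathbb{R}^N:1<|x|<2\}$, $2<p<2^*$ ($2^*=\frac{2N}{N-2}$ if $N\ge3$, $+\infty$ if $N=2$), $\lambda_1$ the first Dirichlet eigenvalue of $-\Delta$ on $T$, and for $\lambda>-\lambda_1$ let $u_\lambda=u_\lambda(r)$, $r=|x|\in(1,2)$, be the unique positive solution in $H^1_{0,rad}(T)$ of $-\Delta u+\lambda u=u^{p-1}$ in $T$, $u=0$ on $\partial T$. Then $u_\lambda$ has a unique maximum point $\bar r_\lambda\in(1,2)$, and $u_\lambda'>0$ on $(1,\bar r_\lambda)$, $u_\lambda'<0$ on $(\bar r_\lambda,2)$. *)

(* Defs.v *)
From Stdlib Require Import Reals.
From Coquelicot Require Import Coquelicot.
Open Scope R_scope.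

(* Radial reduction: for a radial function x |-> u(|x|) on the annulus
   T = {1 < |x| < 2} in R^N, -Delta u = -(u'' + (N-1)/r u'). *)

Definition radial_test (phi : R -> R) : Prop :=
  (forall r, 1 <= r <= 2 -> ex_derive phi r) /\
  (forall r, 1 <= r <= 2 -> continuous (Derive phi) r) /\
  phi 1 = 0 /\ phi 2 = 0 /\
  (exists r, 1 < r < 2 /\ phi r <> 0).

(* Rayleigh quotient  int_T |grad phi|^2 / int_T phi^2  for radial phi
   (the common factor |S^{N-1}| cancels). *)
Definition rayleigh (N : nat) (phi : R -> R) : R :=
  RInt (fun r => (Derive phi r) ^ 2 * r ^ (N - 1)) 1 2 /
  RInt (fun r => (phi r) ^ 2 * r ^ (N - 1)) 1 2.

Definition lambda1 (N : nat) : Rbar :=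
  Glb_Rbar (fun q => exists phi, radial_test phi /\ q = rayleigh N phi).

Definition subcritical (N : nat) (p : R) : Prop :=
  2 < p /\ ((3 <= N)%nat -> p < 2 * INR N / (INR N - 2)).

Definition pos_rad_sol (N : nat) (p lambda : R) (u : R -> R) : Prop :=
  (forall r, 1 <= r <= 2 -> continuity_pt u r) /\
  (forall r, 1 < r < 2 -> ex_derive u r /\ ex_derive (Derive u) r) /\
  u 1 = 0 /\ u 2 = 0 /\
  (forall r, 1 < r < 2 -> 0 < u r) /\
  (forall r, 1 < r < 2 ->
     - (Derive (Derive u) r + (INR N - 1) / r * Derive u r) + lambda * u r
       = Rpower (u r) (p - 1)).

(* Main.v *)
Require Import Defs.
From Stdlib Require Import Reals Lra Psatz.
From Coquelicot Require Import Coquelicot.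
Open Scope R_scope.

Lemma cont_of (g : R -> R) x : ex_derive g x -> continuity_pt g x.
Proof. intros H. apply continuity_pt_filterlim. apply (ex_derive_continuous g x H). Qed.

Lemma mvt (g : R -> R) a b : a < b -> (forall x, a <= x <= b -> ex_derive g x) ->
  exists c, a <= c <= b /\ g b - g a = Derive g c * (b - a).
Proof.
  intros Hab Hd.
  destruct (MVT_gen g a b (Derive g)) as [c [Hc He]].
  - intros x Hx. rewrite Rmin_left in Hx by lra. rewrite Rmax_right in Hx by lra.
    apply Derive_correct, Hd; lra.
  - intros x Hx. rewrite Rmin_left in Hx by lra. rewrite Rmax_right in Hx by lra.
    apply cont_of, Hd; lra.
  - exists c. rewrite Rmin_left in Hc by lra. rewrite Rmax_right in Hc by lra. auto.
Qed.

Lemma strict_inc (g : R -> R) a b : a < b -> (forall x, a <= x <= b -> ex_derive g x) ->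
  (forall x, a <= x <= b -> 0 <= Derive g x) -> (forall x, a < x < b -> 0 < Derive g x) ->
  g a < g b.
Proof.
  intros Hab Hd H1 H2.
  set (t1 := a + (b-a)/3). set (t2 := a + 2*(b-a)/3).
  destruct (mvt g a t1) as [c1 [Hc1 E1]]; [unfold t1; lra| intros; apply Hd; unfold t1 in *; lra|].
  destruct (mvt g t1 t2) as [c2 [Hc2 E2]]; [unfold t1,t2; lra| intros; apply Hd; unfold t1,t2 in *; lra|].
  destruct (mvt g t2 b) as [c3 [Hc3 E3]]; [unfold t2; lra| intros; apply Hd; unfold t2 in *; lra|].
  assert (0 <= Derive g c1) by (apply H1; unfold t1 in *; lra).
  assert (0 < Derive g c2) by (apply H2; unfold t1,t2 in *; lra).
  assert (0 <= Derive g c3) by (apply H1; unfold t2 in *; lra).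
  assert (0 < t1 - a) by (unfold t1; lra).
  assert (0 < t2 - t1) by (unfold t1, t2; lra).
  assert (0 < b - t2) by (unfold t2; lra).
  nra.
Qed.

Lemma strict_dec (g : R -> R) a b : a < b -> (forall x, a <= x <= b -> ex_derive g x) ->
  (forall x, a <= x <= b -> Derive g x <= 0) -> (forall x, a < x < b -> Derive g x < 0) ->
  g b < g a.
Proof.
  intros Hab Hd H1 H2.
  set (t1 := a + (b-a)/3). set (t2 := a + 2*(b-a)/3).
  destruct (mvt g a t1) as [c1 [Hc1 E1]]; [unfold t1; lra| intros; apply Hd; unfold t1 in *; lra|].
  destruct (mvt g t1 t2) as [c2 [Hc2 E2]]; [unfold t1,t2; lra| intros; apply Hd; unfold t1,t2 in *; lra|].
  destruct (mvt g t2 b) as [c3 [Hc3 E3]]; [unfold t2; lra| intros; apply Hd; unfold t2 in *; lra|].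
  assert (Derive g c1 <= 0) by (apply H1; unfold t1 in *; lra).
  assert (Derive g c2 < 0) by (apply H2; unfold t1,t2 in *; lra).
  assert (Derive g c3 <= 0) by (apply H1; unfold t2 in *; lra).
  assert (0 < t1 - a) by (unfold t1; lra).
  assert (0 < t2 - t1) by (unfold t1, t2; lra).
  assert (0 < b - t2) by (unfold t2; lra).
  nra.
Qed.

Lemma loc_sign (g : R -> R) x : ex_derive g x -> Derive g x <> 0 ->
  exists d, 0 < d /\ forall h, h <> 0 -> Rabs h < d -> 0 < (g (x+h) - g x) * h * Derive g x.
Proof.
  intros Hd Hn.
  pose proof (proj1 (is_derive_Reals g x (Derive g x)) (Derive_correct g x Hd)) as L.
  destruct (L (Rabs (Derive g x))) as [d Hdl]. { apply Rabs_pos_lt; auto. }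
  exists d. split. { apply cond_pos. }
  intros h Hh Hah. specialize (Hdl h Hh Hah).
  set (q := (g (x + h) - g x) / h) in *.
  assert (Hq : g (x+h) - g x = q * h) by (unfold q; field; auto).
  rewrite Hq.
  assert (0 < q * Derive g x).
  { destruct (Rle_or_lt 0 (Derive g x)) as [Hp|Hp].
    - rewrite (Rabs_right (Derive g x)) in Hdl by (apply Rle_ge; exact Hp). apply Rabs_def2 in Hdl. nra.
    - rewrite (Rabs_left (Derive g x)) in Hdl by exact Hp. apply Rabs_def2 in Hdl. nra. }
  assert (0 < h * h) by (apply Rsqr_pos_lt in Hh; unfold Rsqr in Hh; exact Hh).
  nra.
Qed.

Definition G (p lambda s : R) := /p * Rpower s p + (-lambda/2) * s^2.

Lemma is_derive_eq (f : R -> R) x l l' : is_derive f x l -> l = l' -> is_derive f x l'.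
Proof. intros H ->; exact H. Qed.

Lemma G_deriv p lambda s : 0 < s -> 0 < p ->
  is_derive (G p lambda) s (Rpower s (p-1) - lambda * s).
Proof.
  intros Hs Hp.
  assert (H1 : is_derive (fun s => Rpower s p) s (p * Rpower s (p-1))).
  { apply is_derive_Reals. apply derivable_pt_lim_power; auto. }
  assert (H2 : is_derive (fun s : R => s^2) s (2 * s)).
  { auto_derive; auto; ring. }
  pose proof (is_derive_plus _ _ s _ _ (is_derive_scal _ _ (/p) _ H1) (is_derive_scal _ _ (-lambda/2) _ H2)) as H.
  unfold G. eapply is_derive_eq; [exact H|]. unfold plus; simpl. field. lra.
Qed.

Definition En (p lambda : R) (u : R -> R) x := /2 * (Derive u x)^2 + G p lambda (u x).

Lemma En_deriv p lambda u x : 0 < p -> 0 < u x -> ex_derive u x -> ex_derive (Derive u) x ->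
  is_derive (En p lambda u) x (Derive u x * Derive (Derive u) x + (Rpower (u x) (p-1) - lambda * u x) * Derive u x).
Proof.
  intros Hp Hu H1 H2.
  assert (A : is_derive (fun x => (Derive u x)^2) x (INR 2 * Derive (Derive u) x * Derive u x ^ 1)).
  { apply is_derive_pow. apply Derive_correct; auto. }
  assert (B : is_derive (fun x => G p lambda (u x)) x (scal (Derive u x) (Rpower (u x) (p-1) - lambda * u x))).
  { apply (is_derive_comp (G p lambda) u x). apply G_deriv; auto. apply Derive_correct; auto. }
  pose proof (is_derive_plus _ _ x _ _ (is_derive_scal _ _ (/2) _ A) B) as H.
  unfold En. eapply is_derive_eq; [exact H|]. unfold plus, scal; simpl. unfold mult; simpl. simpl. field.
Qed.

Lemma sign_of X h L : 0 < (X - 0) * h * L -> (0 < h*L -> 0 < X) /\ (h*L < 0 -> X < 0).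
Proof. intros H. split; intros; nra. Qed.

Lemma sign_of' X h L : 0 < X * h * L -> (0 < h*L -> 0 < X) /\ (h*L < 0 -> X < 0).
Proof. intros H. split; intros; nra. Qed.

Theorem lemma2p1 (N : nat) (p lambda : R) (u : R -> R)
  (hN : (2 <= N)%nat)
  (hp : subcritical N p)
  (hlam : Rbar_lt (Finite (- lambda)) (lambda1 N))
  (hu : pos_rad_sol N p lambda u)
  (huniq : forall v, pos_rad_sol N p lambda v -> forall r, 1 < r < 2 -> v r = u r) :
  exists rbar, 1 < rbar < 2 /\
    (forall r, 1 < r < 2 -> r <> rbar -> u r < u rbar) /\
    (forall r, 1 < r < rbar -> 0 < Derive u r) /\
    (forall r, rbar < r < 2 -> Derive u r < 0).
Proof.
  destruct hp as [hp2 _].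
  destruct hu as [Hc [Hd [Hu1 [Hu2 [Hpos Hode]]]]].
  assert (HN : 1 <= INR N - 1). { apply le_INR in hN. simpl in hN. lra. }
  assert (Rp : forall s y, 0 < Rpower s y) by (intros; unfold Rpower; apply exp_pos).
  assert (Hode' : forall r, 1<r<2 -> Derive (Derive u) r = lambda * u r - Rpower (u r) (p-1) - (INR N - 1)/r * Derive u r).
  { intros r Hr. specialize (Hode r Hr). lra. }
  assert (HE : forall r, 1<r<2 -> is_derive (En p lambda u) r (- ((INR N - 1)/r) * (Derive u r)^2)).
  { intros r Hr. destruct (Hd r Hr) as [Hd1 Hd2]. eapply is_derive_eq.
    apply En_deriv; auto; try lra; apply Hpos; auto.
    rewrite (Hode' r Hr). match goal with |- ?a = ?b => change (@eq R a b) end. field. lra. }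
  assert (Emon : forall a b, 1<a -> a<=b -> b<2 -> En p lambda u b <= En p lambda u a).
  { intros a b Ha Hab Hb. destruct (Rle_lt_or_eq_dec _ _ Hab) as [Hlt|Heq]; [|subst; lra].
    destruct (mvt (En p lambda u) a b Hlt) as [c [Hc' Ee]].
    - intros x Hx. eexists. apply HE. lra.
    - rewrite (is_derive_unique _ _ _ (HE c ltac:(lra))) in Ee.
      assert (0 < (INR N -1)/c) by (apply Rdiv_lt_0_compat; lra).
      assert (0 <= Derive u c ^ 2) by apply pow2_ge_0.
      assert (0 <= (INR N - 1)/c * Derive u c ^ 2) by (apply Rmult_le_pos; lra). nra. }
  assert (crit : forall r0, 1<r0<2 -> Derive u r0 = 0 -> Derive (Derive u) r0 < 0).
  { intros r0 Hr0 HD0.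
    assert (Hs0 : 0 < u r0) by (apply Hpos; auto).
    assert (HG : 0 <= G p lambda (u r0)).
    { destruct (Rle_or_lt 0 (G p lambda (u r0))) as [h|h]; [exact h|exfalso].
      set (c := - G p lambda (u r0)).
      assert (Hc0 : 0 < c) by (unfold c; lra).
      assert (HE0 : En p lambda u r0 = - c) by (unfold En, c; rewrite HD0; ring).
      pose proof (Rabs_pos lambda) as HA0. pose proof (Rle_abs lambda) as HA1. pose proof (Rle_abs (-lambda)) as HA2.
      rewrite Rabs_Ropp in HA2. set (A := Rabs lambda) in *. clearbody A.
      assert (HA : 0 < A + 1) by lra.
      set (eps := Rmin 1 (c / (A + 1))).
      assert (Heps : 0 < eps). { unfold eps. apply Rmin_pos; [lra|]. apply Rdiv_lt_0_compat; lra. }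
      destruct (Hc 2 ltac:(lra) eps Heps) as [alp [Halp Hcl]].
      set (r := Rmax ((r0+2)/2) (2 - alp/2)).
      assert (Hr1 : (r0+2)/2 <= r) by apply Rmax_l.
      assert (Hr2 : 2 - alp/2 <= r) by apply Rmax_r.
      assert (Hr3 : r < 2). { unfold r. apply Rmax_lub_lt; lra. }
      assert (Hur : R_dist (u r) (u 2) < eps).
      { apply Hcl. split. split; [exact I| lra]. simpl. unfold R_dist. rewrite Rabs_left by lra. lra. }
      unfold R_dist in Hur. rewrite Hu2, Rminus_0_r in Hur.
      assert (Hupos : 0 < u r) by (apply Hpos; lra).
      rewrite Rabs_right in Hur by lra.
      assert (Hu_1 : u r < 1) by (eapply Rlt_le_trans; [exact Hur| apply Rmin_l]).
      assert (Hu_c : u r < c/(A + 1)) by (eapply Rlt_le_trans; [exact Hur| apply Rmin_r]).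
      assert (Hcc : c / (A + 1) * (A + 1) = c) by (field; lra).
      assert (Hu_c' : u r * (A + 1) < c) by nra.
      assert (EGr : G p lambda (u r) <= En p lambda u r).
      { unfold En. pose proof (pow2_ge_0 (Derive u r)). lra. }
      assert (Emr : En p lambda u r <= En p lambda u r0) by (apply Emon; lra).
      assert (Glow : - (A) * (u r)^2 / 2 <= G p lambda (u r)).
      { unfold G. pose proof (Rp (u r) p).
        assert (0 < /p) by (apply Rinv_0_lt_compat; lra).
        pose proof (pow2_ge_0 (u r)).
        assert (Hw : 0 <= /p * Rpower (u r) p) by (apply Rmult_le_pos; lra).
        assert (Hw2 : 0 <= (A - lambda) * (u r)^2) by (apply Rmult_le_pos; lra).
        set (w := /p * Rpower (u r) p) in *. clear -Hw Hw2. nra. }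
      assert (A * (u r)^2 <= A * u r) by nra.
      nra. }
    assert (HRp : Rpower (u r0) p = u r0 * Rpower (u r0) (p-1)).
    { replace p with (1 + (p-1)) at 1 by ring. rewrite Rpower_plus, Rpower_1; auto. }
    unfold G in HG. rewrite HRp in HG.
    set (a := Rpower (u r0) (p-1)) in *.
    assert (Hpp : p * (/p * (u r0 * a)) = u r0 * a) by (field; lra).
    assert (H3 : 0 <= u r0 * a - p * lambda * (u r0)^2 / 2) by nra.
    assert (H4 : 0 <= a - p * lambda * u r0 / 2).
    { destruct (Rle_or_lt 0 (a - p * lambda * u r0 / 2)) as [h|h]; auto. nra. }
    rewrite Hode' by auto. rewrite HD0.
    assert (0 < a) by apply Rp.
    rewrite Rmult_0_r. fold a. clear HG Hpp HRp.
    destruct (Rle_or_lt lambda 0) as [hl|hl].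
    - assert (lambda * u r0 <= 0) by nra. lra.
    - assert (0 < (p-2) * (lambda * u r0)) by (apply Rmult_lt_0_compat; nra). nra. }
  destruct (continuity_ab_maj u 1 2 ltac:(lra) Hc) as [rbar [Hmax Hrb]].
  assert (Hm0 : 0 < u rbar).
  { pose proof (Hpos (3/2) ltac:(lra)). pose proof (Hmax (3/2) ltac:(lra)). lra. }
  assert (Hrb' : 1 < rbar < 2).
  { destruct Hrb as [[h1|h1] [h2|h2]]; subst; try lra. }
  clear Hrb.
  assert (HD0 : Derive u rbar = 0).
  { destruct (Req_dec (Derive u rbar) 0) as [h|h]; auto. exfalso.
    destruct (loc_sign u rbar (proj1 (Hd rbar Hrb')) h) as [d [Hd0 Hl]].
    set (k := Rmin d (Rmin (rbar-1) (2-rbar)) / 2).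
    assert (Hk : 0 < k).
    { unfold k. apply Rdiv_lt_0_compat; [|lra]. apply Rmin_pos; [lra|]. apply Rmin_pos; lra. }
    assert (Hk1 : 2*k <= d) by (unfold k; pose proof (Rmin_l d (Rmin (rbar-1) (2-rbar))); lra).
    assert (Hk2 : 2*k <= Rmin (rbar-1) (2-rbar)) by (unfold k; pose proof (Rmin_r d (Rmin (rbar-1) (2-rbar))); lra).
    pose proof (Rmin_l (rbar-1) (2-rbar)). pose proof (Rmin_r (rbar-1) (2-rbar)).
    destruct (Rle_or_lt 0 (Derive u rbar)) as [hp|hn].
    - assert (hp' : 0 < Derive u rbar) by lra.
      specialize (Hl k ltac:(lra) ltac:(rewrite Rabs_right; lra)).
      destruct (sign_of' _ _ _ Hl) as [S _]. pose proof (S ltac:(nra)).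
      pose proof (Hmax (rbar + k) ltac:(lra)). lra.
    - specialize (Hl (-k) ltac:(lra) ltac:(rewrite Rabs_Ropp, Rabs_right; lra)).
      destruct (sign_of' _ _ _ Hl) as [S _]. pose proof (S ltac:(nra)).
      pose proof (Hmax (rbar + - k) ltac:(lra)). lra. }

  assert (Dx : forall x, 1 < x < 2 -> ex_derive u x) by (intros; apply Hd; auto).
  assert (DDx : forall x, 1 < x < 2 -> ex_derive (Derive u) x) by (intros; apply Hd; auto).
  assert (left_drop : forall x, 1 < x < 2 -> 0 <= Derive u x ->
            exists d, 0 < d /\ forall y, x - d < y < x -> 1 < y -> u y < u x).
  { intros x Hx HDx. destruct HDx as [HDx|HDx].
    - destruct (loc_sign u x (Dx x Hx) ltac:(lra)) as [d [Hd0 Hl]].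
      exists d. split; auto. intros y Hy Hy1.
      specialize (Hl (y - x) ltac:(lra) ltac:(rewrite Rabs_left; lra)).
      replace (x + (y - x)) with y in Hl by ring.
      destruct (sign_of' _ _ _ Hl) as [_ S]. pose proof (S ltac:(nra)). lra.
    - pose proof (crit x Hx (eq_sym HDx)) as Hc2.
      destruct (loc_sign (Derive u) x (DDx x Hx) ltac:(lra)) as [d [Hd0 Hl]].
      exists d. split; auto. intros y Hy Hy1.
      apply strict_inc; [lra | intros; apply Dx; lra | | ].
      + intros z Hz. destruct (Req_dec z x) as [->|hz]; [lra|].
        specialize (Hl (z - x) ltac:(lra) ltac:(rewrite Rabs_left; lra)).
        replace (x + (z - x)) with z in Hl by ring. rewrite <- HDx in Hl.
        destruct (sign_of _ _ _ Hl) as [S _]. pose proof (S ltac:(nra)). lra.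
      + intros z Hz.
        specialize (Hl (z - x) ltac:(lra) ltac:(rewrite Rabs_left; lra)).
        replace (x + (z - x)) with z in Hl by ring. rewrite <- HDx in Hl.
        destruct (sign_of _ _ _ Hl) as [S _]. apply S. nra. }
  assert (right_drop : forall x, 1 < x < 2 -> Derive u x <= 0 ->
            exists d, 0 < d /\ forall y, x < y < x + d -> y < 2 -> u y < u x).
  { intros x Hx HDx. destruct HDx as [HDx|HDx].
    - destruct (loc_sign u x (Dx x Hx) ltac:(lra)) as [d [Hd0 Hl]].
      exists d. split; auto. intros y Hy Hy1.
      specialize (Hl (y - x) ltac:(lra) ltac:(rewrite Rabs_right; lra)).
      replace (x + (y - x)) with y in Hl by ring.
      destruct (sign_of' _ _ _ Hl) as [_ S]. pose proof (S ltac:(nra)). lra.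
    - pose proof (crit x Hx HDx) as Hc2.
      destruct (loc_sign (Derive u) x (DDx x Hx) ltac:(lra)) as [d [Hd0 Hl]].
      exists d. split; auto. intros y Hy Hy1.
      apply strict_dec; [lra | intros; apply Dx; lra | | ].
      + intros z Hz. destruct (Req_dec z x) as [->|hz]; [lra|].
        specialize (Hl (z - x) ltac:(lra) ltac:(rewrite Rabs_right; lra)).
        replace (x + (z - x)) with z in Hl by ring. rewrite HDx in Hl.
        destruct (sign_of _ _ _ Hl) as [_ S]. pose proof (S ltac:(nra)). lra.
      + intros z Hz.
        specialize (Hl (z - x) ltac:(lra) ltac:(rewrite Rabs_right; lra)).
        replace (x + (z - x)) with z in Hl by ring. rewrite HDx in Hl.
        destruct (sign_of _ _ _ Hl) as [_ S]. apply S. nra. }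
  assert (no_min : forall a b m, 1 < a -> a < b -> b < 2 -> a <= m <= b ->
            (forall c, a <= c <= b -> u m <= u c) ->
            (m < b -> 0 < Derive u m) /\ (a < m -> Derive u m < 0)).
  { intros a b m Ha Hab Hb Hm Hmin. split; intros Hlt.
    - destruct (Rlt_or_le 0 (Derive u m)) as [h|h]; auto. exfalso.
      destruct (right_drop m ltac:(lra) h) as [d [Hd0 Hy]].
      pose proof (Rmin_l d (b-m)). pose proof (Rmin_r d (b-m)).
      assert (0 < Rmin d (b-m)) by (apply Rmin_pos; lra).
      pose proof (Hy (m + Rmin d (b-m)/2) ltac:(lra) ltac:(lra)).
      pose proof (Hmin (m + Rmin d (b-m)/2) ltac:(lra)). lra.
    - destruct (Rlt_or_le (Derive u m) 0) as [h|h]; auto. exfalso.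
      destruct (left_drop m ltac:(lra) h) as [d [Hd0 Hy]].
      pose proof (Rmin_l d (m-a)). pose proof (Rmin_r d (m-a)).
      assert (0 < Rmin d (m-a)) by (apply Rmin_pos; lra).
      pose proof (Hy (m - Rmin d (m-a)/2) ltac:(lra) ltac:(lra)).
      pose proof (Hmin (m - Rmin d (m-a)/2) ltac:(lra)). lra. }
  assert (Hright : forall r, rbar < r < 2 -> Derive u r < 0).
  { intros r Hr. destruct (Rlt_or_le (Derive u r) 0) as [h|h]; auto. exfalso.
    destruct (continuity_ab_min u rbar r ltac:(lra) ltac:(intros; apply Hc; lra)) as [m [Hmin Hm]].
    destruct (no_min rbar r m ltac:(lra) ltac:(lra) ltac:(lra) Hm Hmin) as [A1 A2].
    destruct (Req_dec m rbar) as [->|h1]; [pose proof (A1 ltac:(lra)); lra|].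
    destruct (Req_dec m r) as [->|h2]; [pose proof (A2 ltac:(lra)); lra|].
    pose proof (A1 ltac:(lra)). pose proof (A2 ltac:(lra)). lra. }
  assert (Hleft : forall r, 1 < r < rbar -> 0 < Derive u r).
  { intros r Hr. destruct (Rlt_or_le 0 (Derive u r)) as [h|h]; auto. exfalso.
    destruct (continuity_ab_min u r rbar ltac:(lra) ltac:(intros; apply Hc; lra)) as [m [Hmin Hm]].
    destruct (no_min r rbar m ltac:(lra) ltac:(lra) ltac:(lra) Hm Hmin) as [A1 A2].
    destruct (Req_dec m rbar) as [->|h1]; [pose proof (A2 ltac:(lra)); lra|].
    destruct (Req_dec m r) as [->|h2]; [pose proof (A1 ltac:(lra)); lra|].
    pose proof (A1 ltac:(lra)). pose proof (A2 ltac:(lra)). lra. }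
  exists rbar. split; [exact Hrb'|]. split; [|split; [exact Hleft|exact Hright]].
  intros r Hr Hne. destruct (Rlt_or_le r rbar) as [h|h].
  - apply strict_inc; [lra | intros; apply Dx; lra | | ].
    + intros z Hz. destruct (Req_dec z rbar) as [->|hz]; [lra|]. apply Rlt_le, Hleft. lra.
    + intros z Hz. apply Hleft. lra.
  - apply strict_dec; [lra | intros; apply Dx; lra | | ].
    + intros z Hz. destruct (Req_dec z rbar) as [->|hz]; [lra|]. apply Rlt_le, Hright. lra.
    + intros z Hz. apply Hright. lra.
Qed.
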